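(* Let $M$ be a closed manifold immersed in $(V,\omega)=(\mathbb{R}^{2d},\sum_i dx_i\wedge dy_i)$, let $\mathbf{Z}=(z_1,\dots,z_n,z_{n+1})$ be an outer symplectic billiard orbit, and let $A(\mathbf{Z})=\tfrac12\sum_{i=1}^n\omega(z_i,z_{i+1})$ and $\mathbf{Q}=(Q_1,\dots,Q_n)$, $Q_i=\tfrac12(z_i+z_{i+1})$. If $\mathbf{Z}$ is an $n$-periodic orbit ($z_{n+1}=z_1$) with $n$ odd, then $A(\mathbf{Z})=F(\mathbf{Q})$, where $F(Q_1,\dots,Q_n)=2\sum_{1\le i<j\le n}(-1)^{i+j-1}\omega(Q_i,Q_j)$. If $\mathbf{Z}$ is an $n$-link orbit connecting $L_1=\mathbb{R}^d_x\times\{0\}$ and $L_2=\{0\}\times\mathbb{R}^d_y$, then $A(\mathbf{Z})=G(\mathbf{Q})$, where, writing $Q_i=(q_i,q_i')$, $G(\mathbf{Q})=2\sum_{i=1}^nq_i\cdot q_i'+4\sum_{1\le i<j\le n}(-1)^{j-i}q_j\cdot q_i'$.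
   Context: $\omega((x,y),(x',y'))=x\cdot y'-y\cdot x'$. Two points $z,z'$ are in outer symplectic billiard correspondence with respect to $M$ if $Q=\tfrac12(z+z')$ is a point of $M$ and $\omega(z'-z,\zeta)=0$ for all $\zeta\in T_QM$. An $n$-periodic orbit is $(z_1,\dots,z_n)$ with $z_i,z_{i+1}$ in correspondence for all $i$ (indices mod $n$). An $n$-link orbit connecting $L_1$ and $L_2$ is $(z_1,\dots,z_{n+1})$ with $z_1\in L_1$, $z_{n+1}\in L_2$ and $z_i,z_{i+1}$ in correspondence for $i=1,\dots,n$. *)

(* Defs.v *)
From HB Require Import structures.
From mathcomp Require Import all_boot all_order all_algebra.
From mathcomp Require Import reals.
Set Implicit Arguments. Unset Strict Implicit. Unset Printing Implicit Defensive.
Import Order.TTheory GRing.Theory Num.Theory.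
Local Open Scope ring_scope.

Definition pt (R : realType) (d : nat) := ('rV[R]_d * 'rV[R]_d)%type.

Section Defs.
Variables (R : realType) (d : nat).

Definition dot (u v : 'rV[R]_d) : R := \sum_(k < d) u 0 k * v 0 k.

Definition omega (z z' : pt R d) : R := dot z.1 z'.2 - dot z.2 z'.1.

Definition padd (z z' : pt R d) : pt R d := (z.1 + z'.1, z.2 + z'.2).
Definition psub (z z' : pt R d) : pt R d := (z.1 - z'.1, z.2 - z'.2).
Definition pscale (a : R) (z : pt R d) : pt R d := (a *: z.1, a *: z.2).

Definition midpt (z z' : pt R d) : pt R d := pscale (1 / 2) (padd z z').

(* M : the (immersed) submanifold, as a set of points of V;
   TM Q : the tangent space T_Q M, as a set of vectors of V. *)
Definition corresp (M : pt R d -> Prop) (TM : pt R d -> pt R d -> Prop)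
  (z z' : pt R d) : Prop :=
  M (midpt z z') /\ forall zeta, TM (midpt z z') zeta -> omega (psub z' z) zeta = 0.

(* Orbit data indexed by nat; the orbit is (z 1, ..., z (n+1)). *)
Definition periodic_orbit M TM (n : nat) (z : nat -> pt R d) : Prop :=
  z n.+1 = z 1%N /\ forall i, (1 <= i <= n)%N -> corresp M TM (z i) (z i.+1).

Definition L1 (z : pt R d) : Prop := z.2 = 0.
Definition L2 (z : pt R d) : Prop := z.1 = 0.

Definition link_orbit M TM (n : nat) (z : nat -> pt R d) : Prop :=
  L1 (z 1%N) /\ L2 (z n.+1) /\
  forall i, (1 <= i <= n)%N -> corresp M TM (z i) (z i.+1).

Definition action (n : nat) (z : nat -> pt R d) : R :=
  (1 / 2) * \sum_(1 <= i < n.+1) omega (z i) (z i.+1).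

Definition Qs (z : nat -> pt R d) (i : nat) : pt R d := midpt (z i) (z i.+1).

Definition Ffun (n : nat) (Q : nat -> pt R d) : R :=
  2 * \sum_(1 <= i < n.+1) \sum_(i.+1 <= j < n.+1)
        (-1) ^+ (i + j - 1) * omega (Q i) (Q j).

Definition Gfun (n : nat) (Q : nat -> pt R d) : R :=
  2 * \sum_(1 <= i < n.+1) dot (Q i).1 (Q i).2
  + 4 * \sum_(1 <= i < n.+1) \sum_(i.+1 <= j < n.+1)
        (-1) ^+ (j - i) * dot (Q j).1 (Q i).2.

End Defs.

(* Main.v *)
Require Import Defs.
From mathcomp Require Import all_boot all_order all_algebra.
From mathcomp Require Import reals.
From mathcomp Require Import ring lra.
Set Implicit Arguments. Unset Strict Implicit. Unset Printing Implicit Defensive.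
Import Order.TTheory GRing.Theory Num.Theory.
Local Open Scope ring_scope.
Section Scal.
Variables (R : realType) (a b : nat -> R).
Definition pa i := 1/2 * (a i + a i.+1).
Definition pb i := 1/2 * (b i + b i.+1).
Definition ta n := \sum_(1 <= i < n.+1) (-1) ^+ i * pa i.
Definition tb n := \sum_(1 <= i < n.+1) (-1) ^+ i * pb i.
Definition Aa n := 1/2 * \sum_(1 <= i < n.+1) (a i * b i.+1 - b i * a i.+1).
Definition Ff n := 2 * \sum_(1 <= i < n.+1) \sum_(i.+1 <= j < n.+1)
        (-1) ^+ (i + j - 1) * (pa i * pb j - pb i * pa j).
Definition Gg n := 2 * \sum_(1 <= i < n.+1) pa i * pb i
  + 4 * \sum_(1 <= i < n.+1) \sum_(i.+1 <= j < n.+1)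
        (-1) ^+ (j - i) * (pa j * pb i).

Lemma sign_cases n : ((-1) ^+ n = 1 :> R) \/ ((-1) ^+ n = -1 :> R).
Proof. rewrite -signr_odd; case: (odd n) => /=; [right|left]; rewrite ?expr1 ?expr0 //. Qed.

Lemma tS (f : nat -> R) n : \sum_(1 <= i < n.+2) (-1) ^+ i * f i =
  \sum_(1 <= i < n.+1) (-1) ^+ i * f i - (-1) ^+ n * f n.+1.
Proof. by rewrite big_nat_recr //= exprS mulN1r mulNr. Qed.

Lemma ta_S n : ta n.+1 = ta n - (-1) ^+ n * pa n.+1.
Proof. exact: tS. Qed.
Lemma tb_S n : tb n.+1 = tb n - (-1) ^+ n * pb n.+1.
Proof. exact: tS. Qed.

Lemma ta_end n : a n.+1 = (-1) ^+ n * (a 1 + 2 * ta n).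
Proof.
elim: n => [|n IH]; first by rewrite /ta big_geq // expr0 mul1r mulr0 addr0.
rewrite ta_S exprS; move: IH; rewrite /pa.
case: (sign_cases n) => ->; lra.
Qed.
Lemma tb_end n : b n.+1 = (-1) ^+ n * (b 1 + 2 * tb n).
Proof.
elim: n => [|n IH]; first by rewrite /tb big_geq // expr0 mul1r mulr0 addr0.
rewrite tb_S exprS; move: IH; rewrite /pb.
case: (sign_cases n) => ->; lra.
Qed.

Lemma Aa_S n : Aa n.+1 = Aa n + 1/2 * (a n.+1 * b n.+2 - b n.+1 * a n.+2).
Proof. by rewrite /Aa big_nat_recr //= mulrDr. Qed.

Lemma dsumS (f : nat -> nat -> R) n :
  \sum_(1 <= i < n.+2) \sum_(i.+1 <= j < n.+2) f i j =
  \sum_(1 <= i < n.+1) \sum_(i.+1 <= j < n.+1) f i j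
  + \sum_(1 <= i < n.+1) f i n.+1.
Proof.
rewrite big_nat_recr //= [X in _ + X]big_geq // addr0 -big_split /=.
apply: eq_big_nat => i /andP [_ hi]; by rewrite big_nat_recr.
Qed.

Lemma hlp1 (e f x y u v : R) : e*f*(x*y - u*v) = f * (e*x*y) - f * (e*u*v).
Proof. ring. Qed.

Lemma Ff_S n : Ff n.+1 = Ff n + 2 * (-1) ^+ n * (ta n * pb n.+1 - tb n * pa n.+1).
Proof.
rewrite /Ff dsumS mulrDr; congr (_ + _).
rewrite -mulrA; congr (_ * _).
rewrite /ta /tb mulrBr !big_distrl /= !big_distrr -sumrB /=.
apply: eq_bigr => i _.
rewrite addnS subn1 /= exprD; exact: hlp1.
Qed.

Lemma sign_sub m k : (k <= m)%N -> (-1) ^+ (m - k) = (-1) ^+ (m + k) :> R.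
Proof.
move=> h; have -> : (m + k = (m - k) + k * 2)%N by rewrite muln2 -addnn addnA subnK.
by rewrite exprD exprM sqrr_sign mulr1.
Qed.

Lemma hlp2 (e f x y : R) : - 1 * (e * f) * (x * y) = - ((e * x) * (f * y)).
Proof. ring. Qed.
Lemma hlp3 (A B C D E F : R) : 2 * A + 2 * (B * C) + (4 * D + 4 * - (E * B * F)) =
  2 * A + 4 * D + 2 * B * C - 4 * E * B * F.
Proof. ring. Qed.

Lemma Gg_S n : Gg n.+1 = Gg n + 2 * pa n.+1 * pb n.+1 - 4 * (-1) ^+ n * pa n.+1 * tb n.
Proof.
rewrite /Gg dsumS big_nat_recr //= !mulrDr.
have -> : \sum_(1 <= i < n.+1) (-1) ^+ (n.+1 - i) * (pa n.+1 * pb i)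
   = - ((-1) ^+ n * pa n.+1 * tb n).
  rewrite /tb !big_distrr -sumrN; apply: eq_big_nat => i /andP [_ hi].
  rewrite sign_sub ?(ltnW hi) // addSn exprS exprD; exact: hlp2.
exact: hlp3.
Qed.

Lemma AF n : Aa n - Ff n = - (a 1 * tb n - b 1 * ta n).
Proof.
elim: n => [|n IH].
  rewrite /Aa /Ff /ta /tb !big_geq //= !mulr0 subr0 oppr0 //.
rewrite Aa_S Ff_S ta_S tb_S.
have ea := ta_end n; have eb := tb_end n.
move: IH ea eb; rewrite /pa /pb.
case: (sign_cases n) => ->;
move: (Aa n) (Ff n) (ta n) (tb n) (a 1) (b 1) (a n.+1) (b n.+1) (a n.+2) (b n.+2)
  => A F t t' a1 b1 x y x2 y2 IH -> ->;
(have -> : A = (A - F) + F by ring); rewrite IH; by field.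
Qed.

Lemma AG n : Aa n - Gg n = 1/2 * (a 1 * b 1 - a n.+1 * b n.+1) + 2 * b 1 * ta n.
Proof.
elim: n => [|n IH].
  rewrite /Aa /Gg /ta !big_geq //= !mulr0 !addr0 subr0 subrr mulr0 //.
rewrite Aa_S Gg_S ta_S.
have ea := ta_end n; have eb := tb_end n.
have ea2 := ta_end n.+1; have eb2 := tb_end n.+1.
rewrite ta_S exprS in ea2; rewrite tb_S exprS in eb2.
move: IH ea eb ea2 eb2; rewrite /pa /pb.
case: (sign_cases n) => ->;
move: (Aa n) (Gg n) (ta n) (tb n) (a 1) (b 1) (a n.+1) (b n.+1) (a n.+2) (b n.+2)
  => A F t t' a1 b1 x y x2 y2 IH ex ey ex2 ey2;
(have -> : A = (A - F) + F by ring); rewrite IH;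
(first [ have hb : b1 = y - 2 * t' by lra | have hb : b1 = - y - 2 * t' by lra ]);
rewrite hb; by field.
Qed.

End Scal.

Section Main.
Variables (R : realType) (d : nat).
Implicit Types (z : nat -> pt R d).

Definition ca z (k : 'I_d) i := (z i).1 0 k.
Definition cb z (k : 'I_d) i := (z i).2 0 k.

Lemma Qs1 z i k : (Qs z i).1 0 k = pa (ca z k) i.
Proof. by rewrite /Qs /midpt /pscale /padd /= !mxE. Qed.
Lemma Qs2 z i k : (Qs z i).2 0 k = pb (cb z k) i.
Proof. by rewrite /Qs /midpt /pscale /padd /= !mxE. Qed.

Lemma action_sum n z : action n z = \sum_k Aa (ca z k) (cb z k) n.
Proof.
rewrite /action /Aa -big_distrr /=; congr (_ * _).
rewrite exchange_big /=; apply: eq_bigr => i _.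
by rewrite /omega /dot -sumrB.
Qed.

Lemma omegaQ z i j : omega (Qs z i) (Qs z j) =
  \sum_k (pa (ca z k) i * pb (cb z k) j - pb (cb z k) i * pa (ca z k) j).
Proof.
rewrite /omega /dot -sumrB; apply: eq_bigr => k _; by rewrite !Qs1 !Qs2.
Qed.

Lemma Ffun_sum n z : Ffun n (Qs z) = \sum_k Ff (ca z k) (cb z k) n.
Proof.
rewrite /Ffun /Ff -big_distrr /=; congr (_ * _).
rewrite exchange_big /=; apply: eq_bigr => i _.
rewrite exchange_big /=; apply: eq_bigr => j _.
by rewrite omegaQ big_distrr.
Qed.

Lemma Gfun_sum n z : Gfun n (Qs z) = \sum_k Gg (ca z k) (cb z k) n.
Proof.
rewrite /Gfun /Gg big_split /= -!big_distrr /=; congr (_ * _ + _ * _).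
  rewrite exchange_big /=; apply: eq_bigr => i _.
  rewrite /dot; apply: eq_bigr => k _; by rewrite Qs1 Qs2.
rewrite exchange_big /=; apply: eq_bigr => i _.
rewrite exchange_big /=; apply: eq_bigr => j _.
rewrite /dot big_distrr; apply: eq_bigr => k _; by rewrite Qs1 Qs2.
Qed.

End Main.

Theorem mainTheorem12 (R : realType) (d : nat)
  (M : pt R d -> Prop) (TM : pt R d -> pt R d -> Prop) :
  (forall (n : nat) (z : nat -> pt R d),
     odd n -> periodic_orbit M TM n z ->
     action n z = Ffun n (Qs z)) /\
  (forall (n : nat) (z : nat -> pt R d),
     link_orbit M TM n z ->
     action n z = Gfun n (Qs z)).
Proof.
split.
- move=> n z hn [hp _]; apply/eqP; rewrite -subr_eq0; apply/eqP.
  rewrite action_sum Ffun_sum -sumrB big1 // => k _.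
  rewrite AF.
  have ea := ta_end (ca z k) n; have eb := tb_end (cb z k) n.
  rewrite -signr_odd hn expr1 /ca /cb hp in ea eb.
  rewrite /ca /cb in ea eb *.
  move: ea eb; move: (ta _ n) (tb _ n) => t t' ea eb.
  have -> : (z 1%N).1 0 k = - t by lra.
  have -> : (z 1%N).2 0 k = - t' by lra.
  ring.
- move=> n z [h1 [h2 _]]; apply/eqP; rewrite -subr_eq0; apply/eqP.
  rewrite action_sum Gfun_sum -sumrB big1 // => k _.
  rewrite AG /ca /cb h2 h1 !mxE; ring.
Qed.
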